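(* For every $\varepsilon \in (0,1]$, $$\inf_{\mu} \sup_{j \geq 1} |\widehat\mu(j)| \;\geq\; \frac{\pi\varepsilon}{8 + 2\pi\varepsilon} \;\geq\; \frac{\varepsilon}{5},$$ where the infimum is over all Borel probability measures $\mu$ on $\mathbf{R}$ with $\mu([\varepsilon,1]) = 1$, and the supremum is over all positive integers $j$.
   Context: For a finite Borel measure $\mu$ on $\mathbf{R}$, its Fourier transform is $\widehat\mu(\xi) = \int e^{-2\pi i \xi x}\,d\mu(x)$ for $\xi \in \mathbf{R}$. *)

(* Defs.v *)
From Stdlib Require Import Reals Lra List.
Import ListNotations.
Open Scope R_scope.

Inductive borel : (R -> Prop) -> Prop :=
  | borel_open : forall A, open_set A -> borel A
  | borel_compl : forall A, borel A -> borel (fun x => ~ A x)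
  | borel_cunion : forall A : nat -> R -> Prop,
      (forall n, borel (A n)) -> borel (fun x => exists n, A n x).

Definition finite_borel_measure (mu : (R -> Prop) -> R) : Prop :=
  (forall A, borel A -> 0 <= mu A) /\
  mu (fun _ => False) = 0 /\
  (forall A : nat -> R -> Prop,
     (forall n, borel (A n)) ->
     (forall n m x, n <> m -> A n x -> A m x -> False) ->
     infinite_sum (fun n => mu (A n)) (mu (fun x => exists n, A n x))).

Definition borel_probability_measure (mu : (R -> Prop) -> R) : Prop :=
  finite_borel_measure mu /\ mu (fun _ => True) = 1.

(* A Borel simple function given as a finite Borel partition of R with values. *)
Definition simple_partition (l : list ((R -> Prop) * R)) : Prop :=
  Forall (fun p => borel (fst p)) l /\
  ForallOrdPairs (fun p q => forall x, fst p x -> fst q x -> False) l /\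
  (forall x, exists p, In p l /\ fst p x).

Definition simple_integral (mu : (R -> Prop) -> R) (l : list ((R -> Prop) * R)) : R :=
  fold_right (fun p acc => snd p * mu (fst p) + acc) 0 l.

Definition simple_below (f : R -> R) (l : list ((R -> Prop) * R)) : Prop :=
  Forall (fun p => forall x, fst p x -> snd p <= f x) l.

Definition simple_above (f : R -> R) (l : list ((R -> Prop) * R)) : Prop :=
  Forall (fun p => forall x, fst p x -> f x <= snd p) l.

(* Lebesgue integral of a bounded function against a finite measure:
   I lies between all lower and upper simple integrals, and these can be
   made arbitrarily close (so I = sup lower = inf upper, unique). *)
Definition is_integral (mu : (R -> Prop) -> R) (f : R -> R) (I : R) : Prop :=
  (forall l, simple_partition l -> simple_below f l -> simple_integral mu l <= I) /\
  (forall l, simple_partition l -> simple_above f l -> I <= simple_integral mu l) /\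
  (forall eta, 0 < eta -> exists l u,
      simple_partition l /\ simple_below f l /\
      simple_partition u /\ simple_above f u /\
      simple_integral mu u - simple_integral mu l < eta).

(* a = |hat mu (xi)|, where hat mu(xi) = int e^{-2 pi i xi x} dmu(x)
     = int cos(2 pi xi x) dmu - i int sin(2 pi xi x) dmu. *)
Definition fourier_abs (mu : (R -> Prop) -> R) (xi : R) (a : R) : Prop :=
  exists C S,
    is_integral mu (fun x => cos (2 * PI * xi * x)) C /\
    is_integral mu (fun x => sin (2 * PI * xi * x)) S /\
    a = sqrt (C ^ 2 + S ^ 2).

(* Main.v *)
Require Import Defs.
From Stdlib Require Import Reals Lra Lia Arith ZArith List Classical FunctionalExtensionality PropExtensionality ClassicalEpsilon.
Import ListNotations.
Open Scope R_scope.


Fixpoint sumR (n:nat) (f:nat->R) : R :=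
  match n with O => 0 | S n => sumR n f + f n end.

Lemma sumR_S : forall n f, sumR (S n) f = sumR n f + f n.
Proof. reflexivity. Qed.
Lemma sumR_0 : forall f, sumR 0 f = 0.
Proof. reflexivity. Qed.

Lemma sumR_ext : forall n f g, (forall i, (i < n)%nat -> f i = g i) -> sumR n f = sumR n g.
Proof. induction n; intros f g H; simpl; auto. rewrite (IHn f g) by (intros; apply H; lia).
  rewrite H by lia; reflexivity. Qed.

Lemma sumR_plus : forall n f g, sumR n (fun i => f i + g i) = sumR n f + sumR n g.
Proof. induction n; intros; simpl; [lra|]. rewrite IHn; ring. Qed.

Lemma sumR_minus : forall n f g, sumR n (fun i => f i - g i) = sumR n f - sumR n g.
Proof. induction n; intros; simpl; [lra|]. rewrite IHn; ring. Qed.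

Lemma sumR_scal : forall n c f, sumR n (fun i => c * f i) = c * sumR n f.
Proof. induction n; intros; simpl; [lra|]. rewrite IHn; ring. Qed.

Lemma sumR_const : forall n c, sumR n (fun _ => c) = INR n * c.
Proof. induction n; intros; simpl sumR; [simpl; lra|]. rewrite IHn, S_INR; ring. Qed.

Lemma sumR_le : forall n f g, (forall i, (i < n)%nat -> f i <= g i) -> sumR n f <= sumR n g.
Proof. induction n; intros f g H; simpl; [lra|].
  pose proof (IHn f g ltac:(intros; apply H; lia)). pose proof (H n ltac:(lia)). lra. Qed.

Lemma sumR_abs : forall n f, Rabs (sumR n f) <= sumR n (fun i => Rabs (f i)).
Proof. induction n; intros; simpl. rewrite Rabs_R0; lra.
  eapply Rle_trans; [apply Rabs_triang|]. specialize (IHn f); lra. Qed.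

Lemma sumR_app : forall a b f, sumR (a + b) f = sumR a f + sumR b (fun i => f (a + i)%nat).
Proof. intros a b; induction b; intros; simpl. rewrite Nat.add_0_r; ring.
  rewrite Nat.add_succ_r; simpl. rewrite IHb; ring. Qed.

Lemma sumR_shift : forall m f, sumR (S m) f = f O + sumR m (fun i => f (S i)).
Proof. intros m f. replace (S m) with (1 + m)%nat by lia. rewrite sumR_app. simpl. ring. Qed.

Lemma sumR_rev : forall n f, sumR n (fun i => f (n - 1 - i)%nat) = sumR n f.
Proof. induction n; intros f; [reflexivity|].
  rewrite sumR_shift. simpl sumR at 2.
  replace (S n - 1 - 0)%nat with n by lia. rewrite <- (IHn f).
  rewrite (sumR_ext n (fun i => f (S n - 1 - S i)%nat) (fun i => f (n - 1 - i)%nat)).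
  ring. intros; f_equal; lia. Qed.

Lemma tail_bound : forall N m, (1 <= N)%nat ->
  sumR m (fun i => 4 / (INR (N + 1 + i))^2) <= 4 / INR N - 4 / INR (N + m).
Proof. intros N m HN; induction m; [rewrite sumR_0, Nat.add_0_r; lra|]. rewrite sumR_S.
  assert (h1 : 1 <= INR N) by (apply (le_INR 1); lia).
  assert (E1 : INR (N + 1 + m) = INR N + INR m + 1) by (rewrite !plus_INR; simpl; ring).
  assert (E2 : INR (N + S m) = INR N + INR m + 1) by (rewrite Nat.add_succ_r, S_INR, plus_INR; ring).
  assert (E3 : INR (N + m) = INR N + INR m) by (rewrite plus_INR; ring).
  rewrite E3 in IHm. rewrite E1, E2. pose proof (pos_INR m).
  assert (ha : 1 <= INR N + INR m) by lra.
  set (a := INR N + INR m) in *.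
  assert (4 / (a+1)^2 <= 4 / a - 4 / (a+1)).
  { apply Rmult_le_reg_r with (a * (a+1)^2). apply Rmult_lt_0_compat; [lra| apply pow_lt; lra].
    field_simplify; try lra. }
  lra. Qed.

Lemma Rabs_le_inv : forall x a, Rabs x <= a -> -a <= x <= a.
Proof. intros x a H. unfold Rabs in H. destruct (Rcase_abs x); split; lra. Qed.


Lemma sin_abs_le_pos : forall z, 0 < z -> Rabs (sin z) <= z.
Proof. intros z h. pose proof (sin_lt_x z h). pose proof (SIN_bound z).
  apply Rabs_le. split; [|lra].
  destruct (Rle_dec z 1). 2:{ lra. }
  assert (0 < sin z) by (apply sin_gt_0; pose proof PI2_3_2; lra). lra. Qed.

Lemma sin_abs_le : forall z, Rabs (sin z) <= Rabs z.
Proof. intros z. destruct (Rtotal_order z 0) as [h|[h|h]].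
  - pose proof (sin_abs_le_pos (-z) ltac:(lra)). rewrite sin_neg, Rabs_Ropp in H.
    rewrite (Rabs_left z); lra.
  - subst; rewrite sin_0, Rabs_R0; lra.
  - rewrite (Rabs_pos_eq z) by lra. apply sin_abs_le_pos; lra.
Qed.

Lemma cos_lip : forall a b, Rabs (cos a - cos b) <= Rabs (a - b).
Proof. intros a b. rewrite form2. rewrite !Rabs_mult.
  pose proof (sin_abs_le ((a - b)/2)). pose proof (SIN_bound ((a+b)/2)).
  assert (Rabs (sin ((a + b) / 2)) <= 1) by (apply Rabs_le; lra).
  assert (Rabs ((a-b)/2) = Rabs (a-b) / 2).
  { unfold Rdiv. rewrite Rabs_mult. rewrite (Rabs_pos_eq (/2)) by lra. reflexivity. }
  replace (Rabs (-2)) with 2 by (rewrite Rabs_left; lra).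
  pose proof (Rabs_pos (sin ((a - b) / 2))). pose proof (Rabs_pos (sin ((a + b) / 2))).
  nra. Qed.

Lemma PI_lt : PI < 334/100.
Proof. pose proof (PI_ineq 2) as [_ H].
  unfold sum_f_R0, tg_alt, PI_tg in H. simpl in H. lra. Qed.

Lemma KB : forall y, 0 < y < PI/2 -> 0 <= / (sin y)^2 - / y^2 <= 1.
Proof. intros y [h1 h2]. pose proof PI_lt as HP.
  pose proof (sin_lt_x y h1). assert (hs : 0 < sin y) by (apply sin_gt_0; lra).
  pose proof (sin_bound y 0 ltac:(lra) ltac:(lra)) as [Hl _].
  unfold sin_approx, sin_term in Hl. simpl in Hl.
  assert (Hy3 : y * (1 - y^2/6) <= sin y) by lra.
  assert (hu : y^2 < 3) by nra.
  split.
  - assert (/ y^2 <= / (sin y)^2). { apply Rinv_le_contravar. apply pow_lt; lra.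
      apply pow_incr; lra. } lra.
  - assert (y^2 <= (sin y)^2 * (1 + y^2)).
    { assert (0 <= y * (1 - y^2/6)) by nra.
      assert ((y * (1 - y^2/6))^2 <= (sin y)^2) by (apply pow_incr; lra).
      assert (y^2 <= (y * (1 - y^2/6))^2 * (1 + y^2)).
      { replace ((y * (1 - y^2/6))^2) with (y^2 * (1-y^2/6)^2) by ring.
        assert (0 <= y^2) by nra.
        set (u := y^2) in *.
        assert (0 <= (3 - u) * (8 - u)) by (apply Rmult_le_pos; lra).
        assert (0 <= u * (24 - 11*u + u^2)) by (apply Rmult_le_pos; nra). nra. }
      nra. }
    apply Rmult_le_reg_r with ((sin y)^2 * y^2). apply Rmult_lt_0_compat; apply pow_lt; lra.
    field_simplify.
    lra. split; lra. Qed.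

Lemma geo : forall phi n, 2 * sin (phi/2) * sumR n (fun j => cos (INR j * phi)) =
   sin ((INR n - 1/2) * phi) + sin (phi/2).
Proof. intros phi n; induction n.
  - rewrite sumR_0. simpl. replace ((0 - 1/2)*phi) with (-(phi/2)) by field. rewrite sin_neg; ring.
  - rewrite sumR_S, Rmult_plus_distr_l, IHn, S_INR.
    replace ((INR n - 1/2) * phi) with (INR n * phi - phi/2) by field.
    replace ((INR n + 1 - 1/2) * phi) with (INR n * phi + phi/2) by field.
    rewrite sin_plus, sin_minus. ring. Qed.


Definition gD (M k j : nat) : R :=
  cos (2*PI*INR j*INR k/INR M) / (sin (PI*INR j/INR M))^2.
Definition cD (M k : nat) : R := sumR (M-1) (fun i => gD M k (S i)).

Lemma sin_grid_pos : forall M j, (1 <= j)%nat -> (j < M)%nat -> 0 < sin (PI*INR j/INR M).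
Proof. intros M j h1 h2. apply sin_gt_0.
  - apply Rdiv_lt_0_compat. apply Rmult_lt_0_compat. exact PI_RGT_0. apply lt_0_INR; lia.
    apply lt_0_INR; lia.
  - assert (0 < INR M) by (apply lt_0_INR; lia). apply lt_INR in h2.
    apply Rmult_lt_reg_r with (INR M); auto.
    replace (PI * INR j / INR M * INR M) with (PI * INR j) by (field; lra).
    pose proof PI_RGT_0. nra. Qed.

Lemma sumcos : forall M k, (1 <= k)%nat -> (k < M)%nat ->
  sumR (M-1) (fun i => cos (2*PI*INR (S i)*INR k/INR M)) = -1.
Proof. intros M k h1 h2.
  set (phi := 2*PI*INR k/INR M).
  assert (HM : 0 < INR M) by (apply lt_0_INR; lia).
  pose proof (geo phi M) as G.
  assert (E1 : (INR M - 1/2) * phi = - (phi/2) + 2 * INR k * PI) by (unfold phi; field; lra).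
  rewrite E1, sin_period, sin_neg in G.
  assert (E2 : phi / 2 = PI * INR k / INR M) by (unfold phi; field; lra).
  pose proof (sin_grid_pos M k h1 h2). rewrite <- E2 in H.
  assert (G2 : sumR M (fun j => cos (INR j * phi)) = 0).
  { apply Rmult_eq_reg_l with (2 * sin (phi/2)). rewrite G; ring. lra. }
  replace M with (S (M-1)) in G2 at 1 by lia. rewrite sumR_shift in G2.
  simpl INR in G2 at 1. rewrite Rmult_0_l, cos_0 in G2.
  rewrite <- (sumR_ext (M-1) (fun i => cos (INR (S i) * phi))). lra.
  intros i _. f_equal. unfold phi. field. lra. Qed.

Lemma gD_2diff : forall M k j, (1 <= k)%nat -> (1 <= j)%nat -> (j < M)%nat ->
  gD M (S k) j - 2 * gD M k j + gD M (k-1) j = -4 * cos (2*PI*INR j*INR k/INR M).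
Proof. intros M k j hk h1 h2. unfold gD.
  pose proof (sin_grid_pos M j h1 h2) as hs.
  assert (HM : 0 < INR M) by (apply lt_0_INR; lia).
  set (a := 2*PI*INR j*INR k/INR M). set (c := PI*INR j/INR M).
  assert (Ea : 2*PI*INR j*INR (S k)/INR M = a + 2*c) by (unfold a, c; rewrite S_INR; field; lra).
  assert (Eb : 2*PI*INR j*INR (k-1)/INR M = a - 2*c) by (unfold a, c; rewrite minus_INR by lia; simpl INR; field; lra).
  rewrite Ea, Eb, cos_plus, cos_minus, cos_2a_sin, sin_2a.
  assert (sin c <> 0) by (unfold c; lra).
  field_simplify; auto. field; auto. Qed.

Lemma cD_2diff : forall M k, (1 <= k)%nat -> (k < M)%nat ->
  cD M (S k) - 2 * cD M k + cD M (k-1) = 4.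
Proof. intros M k h1 h2. unfold cD. rewrite <- sumR_scal, <- sumR_minus, <- sumR_plus.
  rewrite (sumR_ext _ _ (fun i => -4 * cos (2*PI*INR (S i)*INR k/INR M))).
  rewrite sumR_scal, sumcos by lia. ring.
  intros i hi. apply gD_2diff; lia. Qed.

Lemma cD_base : forall M, (1 <= M)%nat -> cD M 1 - cD M 0 = -2 * (INR M - 1).
Proof. intros M hM. unfold cD. rewrite <- sumR_minus.
  rewrite (sumR_ext _ _ (fun _ => -2)). rewrite sumR_const, minus_INR by lia. simpl INR. ring.
  intros i hi. unfold gD. pose proof (sin_grid_pos M (S i) ltac:(lia) ltac:(lia)) as hs.
  assert (HM : 0 < INR M) by (apply lt_0_INR; lia).
  set (c := PI * INR (S i) / INR M) in *.
  replace (2 * PI * INR (S i) * INR 1 / INR M) with (2 * c) by (unfold c; simpl INR; field; lra).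
  replace (2 * PI * INR (S i) * INR 0 / INR M) with 0 by (simpl INR; field; lra).
  rewrite cos_2a_sin, cos_0. field. lra. Qed.

Lemma cD_formula : forall M k, (2 <= M)%nat -> (k <= M)%nat ->
  cD M k = cD M 0 - 2 * INR k * (INR M - INR k).
Proof. intros M k hM hk.
  assert (forall k, (k + 1 <= M)%nat -> cD M k = cD M 0 - 2 * INR k * (INR M - INR k) /\
           cD M (S k) = cD M 0 - 2 * INR (S k) * (INR M - INR (S k))).
  { induction k0; intros h.
    - split. simpl; ring. pose proof (cD_base M ltac:(lia)). simpl INR. lra.
    - destruct (IHk0 ltac:(lia)) as [A B]. split; auto.
      pose proof (cD_2diff M (S k0) ltac:(lia) ltac:(lia)).
      replace (S k0 - 1)%nat with k0 in H by lia. rewrite !S_INR in *. nra. }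
  destruct k. simpl; ring. apply (H k). lia. Qed.


Definition ct (t:R) (j:nat) := cos (2*PI*INR j*t) / (INR j)^2.
Definition fS (n:nat) (t:R) := sumR n (fun i => ct t (S i)).
Definition hT (e x : R) (j:nat) := ct x j - 2 * ct (x - e/2) j + ct (x - e) j.
Definition hN (N:nat) (e x:R) := sumR N (fun i => hT e x (S i)).

Lemma sumR_div : forall n f c, sumR n (fun i => f i / c) = sumR n f / c.
Proof. intros. unfold Rdiv. rewrite <- (Rmult_comm (/c)), <- sumR_scal.
  apply sumR_ext; intros; ring. Qed.

Lemma hN_fS : forall N e x, hN N e x = fS N x - 2 * fS N (x - e/2) + fS N (x - e).
Proof. intros. unfold hN, fS, hT. rewrite sumR_plus, sumR_minus, sumR_scal. reflexivity. Qed.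

Lemma split_sym : forall L (G : nat -> R),
  (forall j, (1 <= j)%nat -> (j <= L)%nat -> G (2*L+2-j)%nat = G j) ->
  sumR (2*L+1) (fun i => G (S i)) = 2 * sumR L (fun i => G (S i)) + G (S L).
Proof. intros L G H.
  replace (2*L+1)%nat with (S L + L)%nat by lia. rewrite sumR_app, sumR_S.
  rewrite <- (sumR_rev L (fun i => G (S i))).
  rewrite (sumR_ext L (fun i => G (S (S L + i))) (fun i => G (S (L - 1 - i)))). ring.
  intros i hi. rewrite <- (H (S (L-1-i))) by lia. f_equal. lia. Qed.

Lemma gD_sym : forall L k j, (1 <= j)%nat -> (j <= L)%nat ->
  gD (2*L+2) k (2*L+2-j) = gD (2*L+2) k j.
Proof. intros L k j h1 h2. unfold gD. set (M := (2*L+2)%nat).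
  assert (HM : 0 < INR M) by (apply lt_0_INR; unfold M; lia).
  rewrite minus_INR by (unfold M; lia).
  replace (2 * PI * (INR M - INR j) * INR k / INR M) with
    (- (2 * PI * INR j * INR k / INR M) + 2 * INR k * PI) by (field; lra).
  replace (PI * (INR M - INR j) / INR M) with (PI - PI * INR j / INR M) by (field; lra).
  rewrite cos_period, cos_neg, sin_PI_x. reflexivity. Qed.

Lemma INR_2L2 : forall L, INR (2*L+2) = 2 * INR L + 2.
Proof. intros. rewrite plus_INR, mult_INR. simpl. ring. Qed.

Lemma gD_mid : forall L k, Rabs (gD (2*L+2) k (S L)) <= 1.
Proof. intros L k. unfold gD.
  assert (HM : 0 < INR (2*L+2)) by (apply lt_0_INR; lia).
  assert (E : INR (2*L+2) = 2 * INR (S L)) by (rewrite INR_2L2, (S_INR L); ring).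
  assert (0 < INR (S L)) by (apply lt_0_INR; lia).
  replace (PI * INR (S L) / INR (2 * L + 2)) with (PI/2) by (rewrite E; field; lra).
  rewrite sin_PI2. replace (1^2) with 1 by ring. unfold Rdiv; rewrite Rinv_1, Rmult_1_r.
  apply Rabs_le. apply COS_bound. Qed.

Lemma term_bound : forall L k j, (1 <= j)%nat -> (j <= L)%nat ->
  Rabs (gD (2*L+2) k j / INR (2*L+2)^2 - ct (INR k / INR (2*L+2)) j / PI^2)
   <= 1 / INR (2*L+2)^2.
Proof. intros L k j h1 h2. unfold gD, ct. set (M := (2*L+2)%nat) in *.
  assert (HM : 0 < INR M) by (apply lt_0_INR; unfold M; lia).
  assert (Hj : 0 < INR j) by (apply lt_0_INR; lia).
  pose proof PI_RGT_0 as HP.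
  set (y := PI * INR j / INR M).
  assert (Hy : 0 < y < PI/2).
  { unfold y; split. apply Rdiv_lt_0_compat; [nra|lra].
    assert (INR j * 2 < INR M). { unfold M. rewrite INR_2L2.
      apply le_INR in h2. lra. }
    apply Rmult_lt_reg_r with (INR M); auto.
    replace (PI * INR j / INR M * INR M) with (PI * INR j) by (field; lra). nra. }
  pose proof (KB y Hy) as [K1 K2].
  assert (hs : 0 < sin y) by (apply sin_gt_0; lra).
  replace (2 * PI * INR j * (INR k / INR M)) with (2 * PI * INR j * INR k / INR M) by (field; lra).
  set (A := 2 * PI * INR j * INR k / INR M).
  assert (E : cos A / sin y ^ 2 / INR M ^ 2 - cos A / INR j ^ 2 / PI ^ 2 =
     cos A * (/ sin y ^ 2 - / y ^2) / INR M ^ 2).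
  { unfold y. field. repeat split; try lra. fold y; lra. }
  rewrite E. unfold Rdiv. rewrite Rabs_mult, Rabs_mult.
  rewrite (Rabs_pos_eq (/ INR M ^ 2)) by (apply Rlt_le, Rinv_0_lt_compat, pow_lt; lra).
  rewrite (Rabs_pos_eq (/ sin y ^ 2 - / y ^ 2)) by lra.
  assert (Rabs (cos A) <= 1) by (apply Rabs_le; apply COS_bound).
  assert (0 < / INR M ^ 2) by (apply Rinv_0_lt_compat, pow_lt; lra).
  pose proof (Rabs_pos (cos A)). rewrite Rmult_1_l.
  rewrite <- (Rmult_1_l (/ INR M ^ 2)) at 2. apply Rmult_le_compat_r; [lra|]. nra. Qed.

Lemma tannery : forall L k,
  Rabs (cD (2*L+2) k / INR (2*L+2)^2 - 2/PI^2 * fS L (INR k / INR (2*L+2))) <= 1 / INR (2*L+2).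
Proof. intros L k. set (M := (2*L+2)%nat).
  assert (HM : 0 < INR M) by (apply lt_0_INR; unfold M; lia).
  pose proof PI_RGT_0 as HP.
  unfold cD. replace (M - 1)%nat with (2*L+1)%nat by (unfold M; lia).
  rewrite (split_sym L (gD M k)) by (intros; apply gD_sym; lia).
  set (t := INR k / INR M).
  assert (E : (2 * sumR L (fun i => gD M k (S i)) + gD M k (S L)) / INR M ^ 2 - 2 / PI ^ 2 * fS L t
     = 2 * sumR L (fun i => gD M k (S i) / INR M ^2 - ct t (S i) / PI^2) + gD M k (S L) / INR M^2).
  { rewrite sumR_minus, !sumR_div. unfold fS. field. split; lra. }
  rewrite E.
  eapply Rle_trans; [apply Rabs_triang|]. rewrite Rabs_mult, (Rabs_pos_eq 2) by lra.
  pose proof (sumR_abs L (fun i => gD M k (S i) / INR M ^2 - ct t (S i) / PI^2)).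
  assert (sumR L (fun i => Rabs (gD M k (S i) / INR M ^2 - ct t (S i) / PI^2)) <= sumR L (fun _ => 1 / INR M^2)).
  { apply sumR_le. intros i hi. apply term_bound; lia. }
  rewrite sumR_const in H0.
  assert (Rabs (gD M k (S L) / INR M ^ 2) <= 1 / INR M^2).
  { unfold Rdiv. rewrite Rabs_mult, (Rabs_pos_eq (/ INR M ^2)) by (apply Rlt_le, Rinv_0_lt_compat, pow_lt; lra).
    pose proof (gD_mid L k) as Hm; fold M in Hm. assert (0 < / INR M ^ 2) by (apply Rinv_0_lt_compat, pow_lt; lra). nra. }
  assert (EM : INR M = 2 * INR L + 2) by (unfold M; apply INR_2L2).
  assert (2 * (INR L * (1 / INR M ^ 2)) + 1 / INR M ^ 2 <= 1 / INR M).
  { rewrite EM. pose proof (pos_INR L). apply Rmult_le_reg_r with ((2 * INR L + 2)^2). nra.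
    field_simplify; nra. }
  lra. Qed.


Lemma grid_identity : forall L l k, (2*l <= k)%nat -> (k <= 2*L+2)%nat ->
  Rabs (hN L (2*INR l/INR (2*L+2)) (INR k/INR (2*L+2)) - PI^2*(2*INR l/INR (2*L+2))^2/2)
   <= 2*PI^2/INR (2*L+2).
Proof. intros L l k h1 h2. set (M := (2*L+2)%nat) in *.
  assert (HM : 0 < INR M) by (apply lt_0_INR; unfold M; lia).
  assert (HP : 0 < PI^2) by (apply pow_lt, PI_RGT_0).
  assert (E2 : INR k / INR M - 2 * INR l / INR M / 2 = (INR k - INR l) / INR M)
    by (field; lra).
  assert (E3 : INR k / INR M - 2 * INR l / INR M = (INR k - 2 * INR l) / INR M)
    by (field; lra).
  rewrite hN_fS, E2, E3.
  pose proof (tannery L k) as T1. pose proof (tannery L (k-l)) as T2. pose proof (tannery L (k-2*l)) as T3.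
  fold M in T1, T2, T3.
  rewrite (cD_formula M k) in T1 by (unfold M in *; lia).
  rewrite (cD_formula M (k-l)) in T2 by (unfold M in *; lia).
  rewrite (cD_formula M (k-2*l)) in T3 by (unfold M in *; lia).
  rewrite !minus_INR in T2 by lia. rewrite !minus_INR, mult_INR in T3 by lia. replace (INR 2) with 2 in T3 by (simpl; ring).
  set (P := PI^2) in *. set (c0 := cD M 0) in *.
  set (K := INR k) in *. set (Lr := INR l) in *. set (m := INR M) in *.
  set (F1 := fS L (K / m)) in *. set (F2 := fS L ((K - Lr) / m)) in *.
  set (F3 := fS L ((K - 2 * Lr) / m)) in *.
  apply Rabs_le_inv in T1. apply Rabs_le_inv in T2. apply Rabs_le_inv in T3.
  assert (E : F1 - 2 * F2 + F3 - P * (2 * Lr / m) ^ 2 / 2 =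
    - (P/2) * (((c0 - 2 * K * (m - K)) / m ^ 2 - 2 / P * F1)
          - 2 * ((c0 - 2 * (K - Lr) * (m - (K - Lr))) / m ^ 2 - 2 / P * F2)
          + ((c0 - 2 * (K - 2 * Lr) * (m - (K - 2 * Lr))) / m ^ 2 - 2 / P * F3))).
  { field. lra. }
  rewrite E. rewrite Rabs_mult, Rabs_Ropp, (Rabs_pos_eq (P/2)) by lra.
  apply Rle_trans with (P/2 * (4 / m)).
  apply Rmult_le_compat_l. lra. apply Rabs_le.
  split; unfold Rdiv in *; lra. 
  right; field; lra.
Qed.


Lemma ct_bound : forall t j, (1 <= j)%nat -> Rabs (ct t j) <= 1 / INR j ^ 2.
Proof. intros t j hj. unfold ct. assert (0 < INR j) by (apply lt_0_INR; lia).
  unfold Rdiv. rewrite Rabs_mult, (Rabs_pos_eq (/ INR j ^ 2)).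
  2:{ apply Rlt_le, Rinv_0_lt_compat, pow_lt; lra. }
  assert (Rabs (cos (2 * PI * INR j * t)) <= 1) by (apply Rabs_le, COS_bound).
  assert (0 < / INR j ^ 2) by (apply Rinv_0_lt_compat, pow_lt; lra). nra. Qed.

Lemma hT_bound : forall e x j, (1 <= j)%nat -> Rabs (hT e x j) <= 4 / INR j ^ 2.
Proof. intros e x j hj. unfold hT.
  pose proof (ct_bound x j hj). pose proof (ct_bound (x - e/2) j hj). pose proof (ct_bound (x-e) j hj).
  apply Rabs_le_inv in H. apply Rabs_le_inv in H0. apply Rabs_le_inv in H1.
  apply Rabs_le. unfold Rdiv in *. lra. Qed.

Lemma tail : forall N n e x, (1 <= N)%nat -> (N <= n)%nat ->
  Rabs (hN n e x - hN N e x) <= 4 / INR N.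
Proof. intros N n e x h1 h2. replace n with (N + (n - N))%nat by lia.
  unfold hN. rewrite sumR_app. set (m := (n - N)%nat).
  replace (sumR N (fun i => hT e x (S i)) + sumR m (fun i => hT e x (S (N + i))) - sumR N (fun i => hT e x (S i)))
    with (sumR m (fun i => hT e x (S (N + i)))) by ring.
  eapply Rle_trans; [apply sumR_abs|].
  eapply Rle_trans. apply (sumR_le m _ (fun i => 4 / (INR (N + 1 + i))^2)).
  { intros i hi. replace (N + 1 + i)%nat with (S (N+i)) by lia. apply hT_bound; lia. }
  pose proof (tail_bound N m h1). assert (0 < INR (N + m)) by (apply lt_0_INR; lia).
  assert (0 < 4 / INR (N+m)) by (apply Rdiv_lt_0_compat; lra). lra. Qed.

Lemma ct_lip : forall a b j, (1 <= j)%nat -> Rabs (ct a j - ct b j) <= 2 * PI * Rabs (a - b).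
Proof. intros a b j hj. unfold ct. assert (h1 : 1 <= INR j) by (apply (le_INR 1); lia).
  replace (cos (2 * PI * INR j * a) / INR j ^ 2 - cos (2 * PI * INR j * b) / INR j ^ 2)
    with ((cos (2 * PI * INR j * a) - cos (2 * PI * INR j * b)) * / INR j ^ 2) by (field; lra).
  rewrite Rabs_mult, (Rabs_pos_eq (/ INR j ^ 2)) by (apply Rlt_le, Rinv_0_lt_compat, pow_lt; lra).
  pose proof (cos_lip (2 * PI * INR j * a) (2 * PI * INR j * b)).
  replace (2 * PI * INR j * a - 2 * PI * INR j * b) with ((2 * PI * INR j) * (a - b)) in H by ring.
  rewrite Rabs_mult, (Rabs_pos_eq (2 * PI * INR j)) in H by (pose proof PI_RGT_0; nra).
  pose proof (Rabs_pos (a - b)). pose proof PI_RGT_0.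
  apply Rle_trans with (2 * PI * INR j * Rabs (a - b) * / INR j ^ 2).
  apply Rmult_le_compat_r; [apply Rlt_le, Rinv_0_lt_compat, pow_lt; lra| lra].
  replace (2 * PI * INR j * Rabs (a - b) * / INR j ^ 2) with (2 * PI * Rabs (a - b) * / INR j) by (field; lra).
  assert (/ INR j <= 1). { rewrite <- Rinv_1. apply Rinv_le_contravar; lra. }
  assert (0 <= 2 * PI * Rabs (a - b)) by nra. nra. Qed.

Lemma hN_cont : forall N e x e' x',
  Rabs (hN N e x - hN N e' x') <= INR N * (2 * PI * (4 * Rabs (x - x') + 2 * Rabs (e - e'))).
Proof. intros. unfold hN. rewrite <- sumR_minus. eapply Rle_trans; [apply sumR_abs|].
  rewrite <- sumR_const. apply sumR_le. intros i hi. unfold hT.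
  pose proof (ct_lip x x' (S i) ltac:(lia)).
  pose proof (ct_lip (x - e/2) (x' - e'/2) (S i) ltac:(lia)).
  pose proof (ct_lip (x - e) (x' - e') (S i) ltac:(lia)).
  pose proof (Rabs_triang (x - x') (-(e - e')/2)).
  replace (x - x' + - (e - e') / 2) with (x - e/2 - (x' - e'/2)) in H2 by field.
  pose proof (Rabs_triang (x - x') (-(e - e'))).
  replace (x - x' + - (e - e')) with (x - e - (x' - e')) in H3 by ring.
  replace (Rabs (- (e - e') / 2)) with (Rabs (e - e') / 2) in H2.
  2:{ unfold Rdiv. rewrite Rabs_mult, Rabs_Ropp, (Rabs_pos_eq (/2)) by lra. reflexivity. }
  rewrite Rabs_Ropp in H3. pose proof PI_RGT_0.
  set (A := ct x (S i) - 2 * ct (x - e / 2) (S i) + ct (x - e) (S i) -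
    (ct x' (S i) - 2 * ct (x' - e' / 2) (S i) + ct (x' - e') (S i))).
  replace A with ((ct x (S i) - ct x' (S i)) - 2 * (ct (x - e / 2) (S i) - ct (x' - e' / 2) (S i))
     + (ct (x - e) (S i) - ct (x' - e') (S i))) by (unfold A; ring).
  eapply Rle_trans; [apply Rabs_triang|]. 
  assert (Rabs ((ct x (S i) - ct x' (S i)) - 2 * (ct (x - e / 2) (S i) - ct (x' - e' / 2) (S i)))
    <= Rabs (ct x (S i) - ct x' (S i)) + 2 * Rabs (ct (x - e / 2) (S i) - ct (x' - e' / 2) (S i))).
  { unfold Rminus at 1. eapply Rle_trans; [apply Rabs_triang|]. rewrite Rabs_Ropp, Rabs_mult, (Rabs_pos_eq 2) by lra. lra. }
  nra. Qed.

Lemma floor_nat : forall y, 0 <= y -> exists k : nat, INR k <= y < INR k + 1.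
Proof. intros y hy. destruct (archimed y) as [a1 a2].
  assert (hz : (0 < up y)%Z) by (apply lt_IZR; simpl; lra).
  exists (Z.to_nat (up y - 1)). rewrite INR_IZR_INZ, Z2Nat.id by lia.
  rewrite minus_IZR. simpl. lra. Qed.

Lemma main_H : forall e x N, 0 < e <= 1 -> e <= x <= 1 -> (1 <= N)%nat ->
  PI^2 * e^2 / 2 - 4 / INR N <= hN N e x.
Proof. intros e x N he hx hN1.
  assert (HP : 0 < PI) by apply PI_RGT_0.
  assert (hNr : 1 <= INR N) by (apply (le_INR 1); lia).
  set (C := 16 * PI * INR N + 4 * PI^2).
  assert (HC : 0 < C) by (unfold C; nra).
  apply Rnot_lt_le. intro Hc.
  set (delta := PI^2 * e^2 / 2 - 4 / INR N - hN N e x).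
  assert (Hd : 0 < delta) by (unfold delta; lra).
  destruct (floor_nat (C / delta)) as [L0 [_ HL0]]. apply Rlt_le, Rdiv_lt_0_compat; lra.
  set (L := (L0 + N)%nat). set (M := (2*L+2)%nat).
  assert (HM : INR M = 2 * INR L + 2) by apply INR_2L2.
  assert (HLr : INR L = INR L0 + INR N) by (unfold L; apply plus_INR).
  pose proof (pos_INR L0). assert (HMpos : 0 < INR M) by lra.
  assert (HMC : C / delta < INR M) by lra.
  destruct (floor_nat ((INR L + 1) * e)) as [l [Hl1 Hl2]]. pose proof (pos_INR L); nra.
  destruct (floor_nat (INR M * x)) as [k [Hk1 Hk2]]. nra.
  assert (hkM : (k <= M)%nat). { apply INR_le. nra. }
  assert (hlk : (2 * l <= k)%nat).
  { assert (INR (2*l) < INR (k+1)). { rewrite mult_INR, plus_INR. simpl. nra. }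
    apply INR_lt in H0. lia. }
  pose proof (grid_identity L l k hlk hkM) as G. fold M in G.
  set (e' := 2 * INR l / INR M) in *. set (x' := INR k / INR M) in *.
  assert (Ee' : e' = INR l / (INR L + 1)) by (unfold e'; rewrite HM; field; lra).
  assert (hdx : Rabs (x - x') <= 1 / INR M).
  { unfold x'. replace (x - INR k / INR M) with ((INR M * x - INR k) * / INR M) by (field; lra).
    assert (0 < / INR M) by (apply Rinv_0_lt_compat; lra).
    apply Rabs_le. split. nra. unfold Rdiv. rewrite Rmult_1_l.
    rewrite <- (Rmult_1_l (/ INR M)) at 2. apply Rmult_le_compat_r; lra. }
  assert (hde : Rabs (e - e') <= 2 / INR M).
  { rewrite Ee'. replace (2 / INR M) with (1 / (INR L + 1)) by (rewrite HM; field; lra).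
    replace (e - INR l / (INR L + 1)) with (((INR L + 1) * e - INR l) * / (INR L + 1)) by (field; lra).
    assert (0 < / (INR L + 1)) by (apply Rinv_0_lt_compat; lra).
    apply Rabs_le. split. nra. unfold Rdiv. rewrite Rmult_1_l.
    rewrite <- (Rmult_1_l (/ (INR L + 1))) at 2. apply Rmult_le_compat_r; lra. }
  assert (he' : 0 <= e' <= e).
  { rewrite Ee'. split. unfold Rdiv. apply Rmult_le_pos; [apply pos_INR| apply Rlt_le, Rinv_0_lt_compat; lra].
    replace (INR l / (INR L + 1)) with (INR l * / (INR L + 1)) by reflexivity.
    assert (0 < / (INR L + 1)) by (apply Rinv_0_lt_compat; lra).
    apply Rmult_le_reg_r with (INR L + 1). lra.
    replace (INR l * / (INR L + 1) * (INR L + 1)) with (INR l) by (field; lra). lra. }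
  pose proof (hN_cont N e x e' x') as Hc1. apply Rabs_le_inv in Hc1.
  pose proof (tail N L e' x' hN1 ltac:(unfold L; lia)) as Ht. apply Rabs_le_inv in Ht.
  apply Rabs_le_inv in G.
  assert (Hq : PI^2 * e^2 / 2 - 2 * PI^2 / INR M <= PI^2 * e'^2 / 2).
  { assert (e^2 - e'^2 <= 4 / INR M).
    { apply Rabs_le_inv in hde.
      replace (e^2 - e'^2) with ((e - e') * (e + e')) by ring.
      apply Rle_trans with ((2 / INR M) * 2). apply Rmult_le_compat; lra. lra. }
    assert (0 < PI^2) by nra.
    replace (2 * PI^2 / INR M) with (PI^2 / 2 * (4 / INR M)) by (field; lra). nra. }
  assert (Hcm : INR N * (2 * PI * (4 * Rabs (x - x') + 2 * Rabs (e - e'))) <= 16 * PI * INR N / INR M).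
  { replace (16 * PI * INR N / INR M) with (INR N * (2 * PI * (4 * (1 / INR M) + 2 * (2 / INR M))))
      by (field; lra).
    apply Rmult_le_compat_l; [lra|]. apply Rmult_le_compat_l; [lra|]. lra. }
  assert (C / INR M < delta).
  { apply Rmult_lt_reg_r with (INR M / delta). apply Rdiv_lt_0_compat; lra.
    replace (C / INR M * (INR M / delta)) with (C / delta) by (field; lra).
    replace (delta * (INR M / delta)) with (INR M) by (field; lra). lra. }
  assert (C / INR M = 16 * PI * INR N / INR M + 2 * PI ^ 2 / INR M + 2 * PI ^ 2 / INR M)
    by (unfold C; field; lra).
  unfold delta in *. lra. Qed.


Definition alpha (e:R) (j:nat) := (1 - 2*cos(PI*INR j*e) + cos(2*PI*INR j*e)) / INR j^2.
Definition beta (e:R) (j:nat) := (-2*sin(PI*INR j*e) + sin(2*PI*INR j*e)) / INR j^2.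
Definition wt (e:R) (j:nat) := 4 * sin(PI*INR j*e/2)^2 / INR j^2.

Lemma hT_ab : forall e x j, (1 <= j)%nat ->
  hT e x j = alpha e j * cos(2*PI*INR j*x) + beta e j * sin(2*PI*INR j*x).
Proof. intros e x j hj. assert (0 < INR j) by (apply lt_0_INR; lia).
  unfold hT, ct, alpha, beta.
  replace (2 * PI * INR j * (x - e / 2)) with (2*PI*INR j*x - PI*INR j*e) by field.
  replace (2 * PI * INR j * (x - e)) with (2*PI*INR j*x - 2*PI*INR j*e) by ring.
  rewrite !cos_minus. field. lra. Qed.

Lemma ab_w : forall e j, (1 <= j)%nat -> alpha e j ^2 + beta e j ^2 = wt e j ^2.
Proof. intros e j hj. assert (hj' : INR j <> 0) by (apply not_0_INR; lia).
  unfold alpha, beta, wt. set (t := PI * INR j * e / 2).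
  replace (PI * INR j * e) with (2 * t) by (unfold t; field).
  replace (2 * PI * INR j * e) with (2 * (2 * t)) by (unfold t; field).
  rewrite !sin_2a, !cos_2a, !sin_2a.
  set (s := sin t). set (c := cos t). set (J := INR j).
  assert (Hc : c*c = 1 - s*s) by (pose proof (sin2_cos2 t); unfold Rsqr in H; unfold s, c; lra).
  replace (2 * s * c * (2 * s * c)) with (4 * s^2 * (c*c)) by ring.
  replace (1 - 2 * (c * c - s * s) + ((c * c - s * s) * (c * c - s * s) - 4 * s ^ 2 * (c * c)))
    with (1 - 2*(c*c - s*s) + (c*c-s*s)^2 - 4*s^2*(c*c)) by ring.
  replace (((-2 * (2 * s * c) + 2 * (2 * s * c) * (c * c - s * s)) / J ^ 2) ^ 2)
    with (16*s^2*(c*c)*(c*c - s*s - 1)^2/J^4) by (field; auto).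
  rewrite Hc. field. auto. Qed.

Lemma wt_nonneg : forall e j, 0 <= wt e j.
Proof. intros. unfold wt. unfold Rdiv. apply Rmult_le_pos. pose proof (pow2_ge_0 (sin (PI * INR j * e / 2))). lra.
  destruct (Nat.eq_dec j 0). subst. simpl. rewrite Rmult_0_l, Rinv_0; lra.
  apply Rlt_le, Rinv_0_lt_compat, pow_lt, lt_0_INR; lia. Qed.

Lemma cs_bound : forall e j C S, (1 <= j)%nat ->
  alpha e j * C + beta e j * S <= wt e j * sqrt (C^2 + S^2).
Proof. intros e j C S hj. pose proof (ab_w e j hj). pose proof (wt_nonneg e j).
  set (a := alpha e j) in *. set (b := beta e j) in *. set (w := wt e j) in *.
  assert (Hq : 0 <= C^2 + S^2) by nra.
  pose proof (sqrt_pos (C^2+S^2)). pose proof (sqrt_sqrt (C^2+S^2) Hq).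
  set (r := sqrt (C^2+S^2)) in *.
  assert ((a*C + b*S)^2 <= (w*r)^2).
  { replace ((w*r)^2) with ((a^2+b^2)*(r*r)) by (rewrite H; ring). rewrite H2.
    assert (0 <= (a*S - b*C)^2) by apply pow2_ge_0. nra. }
  assert (0 <= w * r) by nra. nra. Qed.

Lemma sin_sq_le : forall y, sin y ^2 <= y^2.
Proof. intros y. pose proof (Rsqr_le_abs_1 _ _ (sin_abs_le y)). unfold Rsqr in H. nra. Qed.

Lemma wt_le1 : forall e j, (1 <= j)%nat -> wt e j <= PI^2 * e^2.
Proof. intros e j hj. assert (0 < INR j) by (apply lt_0_INR; lia). unfold wt.
  pose proof (sin_sq_le (PI * INR j * e / 2)).
  apply Rmult_le_reg_r with (INR j ^2). apply pow_lt; lra.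
  replace (4 * sin (PI * INR j * e / 2) ^ 2 / INR j ^ 2 * INR j ^ 2) with (4 * sin (PI * INR j * e / 2) ^ 2) by (field; lra).
  replace ((PI * INR j * e / 2)^2) with (PI^2 * e^2 * INR j^2 / 4) in H0 by field. lra. Qed.

Lemma wt_le2 : forall e j, (1 <= j)%nat -> wt e j <= 4 / INR j ^2.
Proof. intros e j hj. assert (0 < INR j) by (apply lt_0_INR; lia). unfold wt.
  unfold Rdiv. apply Rmult_le_compat_r. apply Rlt_le, Rinv_0_lt_compat, pow_lt; lra.
  pose proof (SIN_bound (PI * INR j * e / 2)).
  assert (sin (PI * INR j * e / 2) ^ 2 <= 1) by nra. lra. Qed.

Lemma wt_sum : forall e N, 0 < e <= 1 -> sumR N (fun i => wt e (S i)) <= 4 * PI * e + PI^2 * e^2.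
Proof. intros e N he. pose proof PI_RGT_0 as HP.
  destruct (floor_nat (2 / (PI * e))) as [J0 [HJ1 HJ2]].
  { apply Rlt_le, Rdiv_lt_0_compat; nra. }
  set (J := S J0).
  assert (HJ : 2 / (PI * e) < INR J /\ INR J <= 2 / (PI * e) + 1) by (unfold J; rewrite S_INR; lra).
  assert (hJ1 : 1 <= INR J) by (apply (le_INR 1); unfold J; lia).
  assert (K1 : INR J * (PI^2 * e^2) <= 2 * PI * e + PI^2 * e^2).
  { assert (INR J * (PI * e) <= 2 + PI * e).
    { apply Rmult_le_reg_r with (/ (PI * e)). apply Rinv_0_lt_compat; nra.
      replace (INR J * (PI * e) * / (PI * e)) with (INR J) by (field; nra).
      replace ((2 + PI * e) * / (PI * e)) with (2 / (PI * e) + 1) by (field; nra). lra. }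
    replace (INR J * (PI^2 * e^2)) with ((INR J * (PI * e)) * (PI * e)) by ring.
    replace (2 * PI * e + PI^2 * e^2) with ((2 + PI * e) * (PI * e)) by ring.
    apply Rmult_le_compat_r; nra. }
  assert (K2 : 4 / INR J <= 2 * PI * e).
  { apply Rmult_le_reg_r with (INR J / (PI * e)). apply Rdiv_lt_0_compat; nra.
    replace (4 / INR J * (INR J / (PI * e))) with (2 * (2 / (PI * e))) by (field; nra).
    replace (2 * PI * e * (INR J / (PI * e))) with (2 * INR J) by (field; nra). lra. }
  assert (forall n, sumR n (fun i => wt e (S i)) <=
     (if le_lt_dec n J then INR n * (PI^2*e^2) else INR J * (PI^2*e^2) + 4 / INR J - 4 / INR n)).
  { induction n. simpl. lra.
    rewrite sumR_S. destruct (le_lt_dec n J) as [h|h]; destruct (le_lt_dec (S n) J) as [h'|h'].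
    - rewrite S_INR. pose proof (wt_le1 e (S n) ltac:(lia)). lra.
    - assert (n = J) by lia. subst n. pose proof (wt_le2 e (S J) ltac:(lia)).
      assert (INR (S J) = INR J + 1) by apply S_INR.
      assert (4 / INR (S J)^2 <= 4 / INR J - 4 / INR (S J)).
      { rewrite H0. apply Rmult_le_reg_r with (INR J * (INR J + 1)^2). apply Rmult_lt_0_compat; [lra| apply pow_lt; lra].
        field_simplify; try lra. }
      lra.
    - lia.
    - pose proof (wt_le2 e (S n) ltac:(lia)).
      assert (INR (S n) = INR n + 1) by apply S_INR.
      assert (1 <= INR n) by (apply (le_INR 1); lia).
      assert (4 / INR (S n)^2 <= 4 / INR n - 4 / INR (S n)).
      { rewrite H0. apply Rmult_le_reg_r with (INR n * (INR n + 1)^2). apply Rmult_lt_0_compat; [lra| apply pow_lt; lra].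
        field_simplify; try lra. }
      lra. }
  specialize (H N). destruct (le_lt_dec N J) as [h|h].
  - apply le_INR in h. assert (0 <= PI^2*e^2) by nra. nra.
  - assert (0 < 4 / INR N) by (apply Rdiv_lt_0_compat; [lra| apply lt_0_INR; lia]). lra.
Qed.


Lemma pred_ext : forall A B : R -> Prop, (forall x, A x <-> B x) -> A = B.
Proof. intros A B H. apply functional_extensionality. intros x. apply propositional_extensionality. auto. Qed.

Lemma borel_ext : forall A B, (forall x, A x <-> B x) -> borel A -> borel B.
Proof. intros A B H HA. rewrite <- (pred_ext A B H). exact HA. Qed.

Lemma borel_lt : forall b, borel (fun x => x < b).
Proof. intros b. apply borel_open. intros x hx. unfold neighbourhood.
  exists (mkposreal (b - x) ltac:(lra)). intros y hy. unfold disc in hy. simpl in hy.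
  apply Rabs_def2 in hy. lra. Qed.

Lemma borel_gt : forall a, borel (fun x => a < x).
Proof. intros a. apply borel_open. intros x hx. unfold neighbourhood.
  exists (mkposreal (x - a) ltac:(lra)). intros y hy. unfold disc in hy. simpl in hy.
  apply Rabs_def2 in hy. lra. Qed.

Lemma borel_True : borel (fun _ => True).
Proof. apply borel_open. intros x _. exists (mkposreal 1 ltac:(lra)). intros y _. exact I. Qed.

Lemma borel_False : borel (fun _ => False).
Proof. apply borel_open. intros x []. Qed.

Lemma borel_or : forall A B, borel A -> borel B -> borel (fun x => A x \/ B x).
Proof. intros A B HA HB.
  apply (borel_ext (fun x => exists n, (match n with O => A | _ => B end) x)).
  - intros x; split. intros [[|n] H]; auto. intros [H|H]; [exists O|exists 1%nat]; auto.
  - apply borel_cunion. intros [|n]; auto. Qed.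

Lemma borel_and : forall A B, borel A -> borel B -> borel (fun x => A x /\ B x).
Proof. intros A B HA HB.
  apply (borel_ext (fun x => ~ (~ A x \/ ~ B x))).
  - intros x; split. intros H. apply not_or_and in H. destruct H; split; apply NNPP; auto.
    intros [H1 H2] [H|H]; auto.
  - apply borel_compl, borel_or; apply borel_compl; auto. Qed.

Lemma borel_not : forall A, borel A -> borel (fun x => ~ A x).
Proof. apply borel_compl. Qed.

Lemma borel_ge : forall a, borel (fun x => a <= x).
Proof. intros a. apply (borel_ext (fun x => ~ (x < a))). intros; lra. apply borel_compl, borel_lt. Qed.

Lemma borel_eq : forall a, borel (fun x => x = a).
Proof. intros a. apply (borel_ext (fun x => ~ (x < a \/ a < x))). intros x; split.
  intros H. apply not_or_and in H. lra. intros H; lra.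
  apply borel_compl, borel_or; [apply borel_lt|apply borel_gt]. Qed.

Fixpoint lsum {A} (F : A -> R) (l : list A) : R :=
  match l with [] => 0 | a :: l => F a + lsum F l end.

Lemma lsum_ext_in : forall {A} (F G : A -> R) l, (forall a, In a l -> F a = G a) -> lsum F l = lsum G l.
Proof. induction l; intros H; simpl; auto. rewrite H by (left; auto). rewrite IHl; auto.
  intros; apply H; right; auto. Qed.

Lemma lsum_le_in : forall {A} (F G : A -> R) l, (forall a, In a l -> F a <= G a) -> lsum F l <= lsum G l.
Proof. induction l; intros H; simpl. lra. pose proof (H a (or_introl eq_refl)).
  pose proof (IHl (fun b hb => H b (or_intror hb))). lra. Qed.

Lemma lsum_plus : forall {A} (F G : A -> R) l, lsum (fun a => F a + G a) l = lsum F l + lsum G l.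
Proof. induction l; simpl; [lra|]. rewrite IHl; ring. Qed.

Lemma lsum_scal : forall {A} c (F : A -> R) l, lsum (fun a => c * F a) l = c * lsum F l.
Proof. induction l; simpl; [lra|]. rewrite IHl; ring. Qed.

Lemma lsum_swap : forall {A B} (G : A -> B -> R) l u,
  lsum (fun a => lsum (fun b => G a b) u) l = lsum (fun b => lsum (fun a => G a b) l) u.
Proof. intros A B G l u. induction l; simpl.
  - induction u; simpl; auto. rewrite <- IHu; ring.
  - rewrite IHl. rewrite <- lsum_plus. reflexivity. Qed.

Lemma lsum_app : forall {A} (F : A -> R) l1 l2, lsum F (l1 ++ l2) = lsum F l1 + lsum F l2.
Proof. induction l1; intros; simpl; [lra|]. rewrite IHl1; ring. Qed.

Lemma lsum_map : forall {A B} (F : B -> R) (f : A -> B) l, lsum F (map f l) = lsum (fun a => F (f a)) l.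
Proof. induction l; simpl; auto. rewrite IHl; auto. Qed.

Lemma simple_integral_lsum : forall mu l, simple_integral mu l = lsum (fun p => snd p * mu (fst p)) l.
Proof. intros mu l; induction l; simpl; auto. rewrite <- IHl. reflexivity. Qed.

Section Meas.
Variable mu : (R -> Prop) -> R.
Hypothesis Hm : finite_borel_measure mu.

Lemma mu_ext : forall A B, (forall x, A x <-> B x) -> mu A = mu B.
Proof. intros A B H. rewrite (pred_ext A B H). reflexivity. Qed.

Lemma mu_empty : forall A, (forall x, ~ A x) -> mu A = 0.
Proof. intros A H. destruct Hm as [_ [H0 _]]. rewrite <- H0. apply mu_ext. intros x; split; auto.
  apply H. intros []. Qed.

Lemma mu_nonneg : forall A, borel A -> 0 <= mu A.
Proof. intros A HA. destruct Hm as [H _]. auto. Qed.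

Lemma mu_add2 : forall A B, borel A -> borel B -> (forall x, A x -> B x -> False) ->
  mu (fun x => A x \/ B x) = mu A + mu B.
Proof. intros A B HA HB Hd. destruct Hm as [_ [H0 Hc]].
  set (sq := fun n : nat => match n with O => A | 1%nat => B | _ => fun _ => False end).
  assert (Hb : forall n, borel (sq n)). { intros [|[|n]]; simpl; auto. apply borel_False. }
  assert (Hdj : forall n m x, n <> m -> sq n x -> sq m x -> False).
  { intros [|[|n]] [|[|m]] x hnm h1 h2; simpl in *; eauto. }
  pose proof (Hc sq Hb Hdj) as S1.
  assert (S2 : infinite_sum (fun n => mu (sq n)) (mu A + mu B)).
  { intros eps heps. exists 1%nat. intros n hn.
    assert (sum_f_R0 (fun n => mu (sq n)) n = mu A + mu B).
    { induction n. lia. destruct n. simpl. reflexivity.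
      simpl sum_f_R0. simpl in IHn. rewrite IHn by lia. simpl. rewrite H0. ring. }
    rewrite H. unfold R_dist. rewrite Rminus_diag, Rabs_R0. auto. }
  pose proof (uniqueness_sum _ _ _ S1 S2). rewrite <- H.
  apply mu_ext. intros x; split.
  - intros [h|h]; [exists O|exists 1%nat]; auto.
  - intros [[|[|n]] h]; simpl in h; auto. destruct h. Qed.

Lemma mu_partition : forall (u : list ((R -> Prop) * R)) A,
  Forall (fun p => borel (fst p)) u ->
  ForallOrdPairs (fun p q => forall x, fst p x -> fst q x -> False) u ->
  borel A -> (forall x, A x -> exists q, In q u /\ fst q x) ->
  mu A = lsum (fun q => mu (fun x => A x /\ fst q x)) u.
Proof. induction u as [|p u IH]; intros A Hb Hd HA Hc; simpl.
  - apply mu_empty. intros x hx. destruct (Hc x hx) as [q [[] _]].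
  - inversion Hb; subst. inversion Hd; subst.
    rewrite (mu_ext A (fun x => (A x /\ fst p x) \/ (A x /\ ~ fst p x))).
    2:{ intros x; split. intros h. destruct (classic (fst p x)); auto. intros [[h _]|[h _]]; auto. }
    rewrite mu_add2.
    2:{ apply borel_and; auto. }
    2:{ apply borel_and; auto. apply borel_not; auto. }
    2:{ intros x [_ h1] [_ h2]; auto. }
    f_equal. rewrite (IH (fun x => A x /\ ~ fst p x)); auto.
    + apply lsum_ext_in. intros q hq. apply mu_ext. intros x; split.
      * intros [[h1 _] h2]; auto.
      * intros [h1 h2]. repeat split; auto. intros h3. rewrite Forall_forall in H3.
        exact (H3 q hq x h3 h2).
    + apply borel_and; auto. apply borel_not; auto.
    + intros x [h1 h2]. destruct (Hc x h1) as [q [[hq|hq] hx]]. subst; contradiction. eauto.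
Qed.

Lemma simple_compare : forall f l u, simple_partition l -> simple_partition u ->
  simple_below f l -> simple_above f u -> simple_integral mu l <= simple_integral mu u.
Proof. intros f l u [Lb [Ld Lc]] [Ub [Ud Uc]] Hl Hu. rewrite !simple_integral_lsum.
  rewrite (lsum_ext_in _ (fun p => snd p * lsum (fun q => mu (fun x => fst p x /\ fst q x)) u) l).
  2:{ intros p hp. rewrite Forall_forall in Lb. rewrite <- mu_partition; auto. }
  rewrite (lsum_ext_in (fun q => snd q * mu (fst q)) (fun q => snd q * lsum (fun p => mu (fun x => fst p x /\ fst q x)) l) u).
  2:{ intros q hq. rewrite Forall_forall in Ub. rewrite (mu_partition l (fst q)); auto.
      f_equal. apply lsum_ext_in. intros p hp. apply mu_ext. intros x; tauto. }
  rewrite (lsum_ext_in (fun p => snd p * _) (fun p => lsum (fun q => snd p * mu (fun x => fst p x /\ fst q x)) u) l)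
    by (intros; rewrite lsum_scal; reflexivity).
  rewrite (lsum_ext_in (fun q => snd q * _) (fun q => lsum (fun p => snd q * mu (fun x => fst p x /\ fst q x)) l) u)
    by (intros; rewrite lsum_scal; reflexivity).
  rewrite <- (lsum_swap (fun p q => snd q * mu (fun x => fst p x /\ fst q x))).
  apply lsum_le_in. intros p hp. apply lsum_le_in. intros q hq.
  unfold simple_below, simple_above in Hl, Hu. rewrite Forall_forall in Lb, Ub, Hl, Hu.
  destruct (classic (exists x, fst p x /\ fst q x)) as [[x [h1 h2]]|hn].
  - apply Rmult_le_compat_r. apply mu_nonneg, borel_and; auto.
    pose proof (Hl p hp x h1). pose proof (Hu q hq x h2). lra.
  - rewrite mu_empty. lra. intros x hx. apply hn; eauto.
Qed.

End Meas.


Lemma FOP_map_fst : forall (Rl : (R -> Prop) -> (R -> Prop) -> Prop) (l : list ((R->Prop)*R)),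
  ForallOrdPairs (fun p q => Rl (fst p) (fst q)) l <-> ForallOrdPairs Rl (map fst l).
Proof. induction l; simpl; split; intros H; try constructor; inversion H; subst.
  - rewrite Forall_map. auto.
  - apply IHl; auto.
  - rewrite Forall_map in H2. auto.
  - apply IHl; auto. Qed.

Definition sp_sets (L : list (R -> Prop)) : Prop :=
  Forall borel L /\ ForallOrdPairs (fun P Q => forall x, P x -> Q x -> False) L /\
  (forall x, exists P, In P L /\ P x).

Lemma sp_iff : forall l, simple_partition l <-> sp_sets (map fst l).
Proof. intros l. unfold simple_partition, sp_sets. rewrite Forall_map.
  rewrite <- (FOP_map_fst (fun P Q => forall x, P x -> Q x -> False)). split.
  - intros [A [B C]]. repeat split; auto. intros x. destruct (C x) as [p [hp hx]].
    exists (fst p). split; auto. apply in_map; auto.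
  - intros [A [B C]]. repeat split; auto. intros x. destruct (C x) as [P [hP hx]].
    apply in_map_iff in hP. destruct hP as [p [<- hp]]. eauto. Qed.

Lemma sp_single : sp_sets [fun _ => True].
Proof. repeat split. constructor. apply borel_True. constructor. constructor. constructor. constructor.
  intros x. exists (fun _ => True). split; simpl; auto. Qed.

Section Grid.
Variable mu : (R -> Prop) -> R.
Variable eps : R.
Hypothesis Hm : borel_probability_measure mu.
Hypothesis He : 0 < eps <= 1.
Hypothesis Hsupp : mu (fun x => eps <= x <= 1) = 1.

Definition Out : R -> Prop := fun x => x < eps \/ 1 < x.

Lemma borel_Out : borel Out.
Proof. apply borel_or; [apply borel_lt|apply borel_gt]. Qed.

Lemma mu_Out : mu Out = 0.
Proof. destruct Hm as [Hf HT].
  assert (mu (fun _ => True) = mu (fun x => eps <= x <= 1) + mu Out).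
  { rewrite <- mu_add2; auto. apply mu_ext. intros x; split; auto. intros _. unfold Out.
    destruct (Rlt_dec x eps); [right; left; auto|]. destruct (Rlt_dec 1 x); [right; right; auto|]. left; lra.
    apply borel_and; [apply borel_ge|]. apply (borel_ext (fun x => ~ (1 < x))). intros; lra. apply borel_compl, borel_gt.
    apply borel_Out. intros x h1 [h2|h2]; lra. }
  lra. Qed.

Definition hs (n : nat) : R := (1 - eps) / INR n.
Definition tk (n k : nat) : R := eps + INR k * hs n.
Definition piece (n k : nat) : (R -> Prop) * R := ((fun x => tk n k <= x /\ x < tk n (S k)), tk n k).
Definition pts (n : nat) : list ((R -> Prop) * R) := map (piece n) (seq 0 n) ++ [((fun x => x = 1), 1)].
Definition part (n : nat) := (Out, 0) :: pts n.

Lemma hs_nonneg : forall n, (1 <= n)%nat -> 0 <= hs n.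
Proof. intros n hn. unfold hs. apply Rmult_le_pos. lra. apply Rlt_le, Rinv_0_lt_compat, lt_0_INR; lia. Qed.

Lemma tk_mono : forall n i j, (1 <= n)%nat -> (i <= j)%nat -> tk n i <= tk n j.
Proof. intros n i j hn hij. unfold tk. apply le_INR in hij. pose proof (hs_nonneg n hn). nra. Qed.

Lemma tk_n : forall n, (1 <= n)%nat -> tk n n = 1.
Proof. intros n hn. unfold tk, hs. field. apply not_0_INR; lia. Qed.

Lemma tk_0 : forall n, tk n 0 = eps.
Proof. intros. unfold tk. simpl. ring. Qed.

Lemma FOP_map_seq : forall (Rl : (R->Prop)*R -> (R->Prop)*R -> Prop) F m s,
  (forall i j, (s <= i)%nat -> (i < j)%nat -> (j < s + m)%nat -> Rl (F i) (F j)) ->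
  ForallOrdPairs Rl (map F (seq s m)).
Proof. induction m; intros s H; simpl; constructor.
  - rewrite Forall_map, Forall_forall. intros j hj. apply in_seq in hj. apply H; lia.
  - apply IHm. intros; apply H; lia. Qed.

Lemma FOP_app1 : forall {A} (Rl : A -> A -> Prop) l e,
  ForallOrdPairs Rl l -> (forall p, In p l -> Rl p e) -> ForallOrdPairs Rl (l ++ [e]).
Proof. induction l; intros e H1 H2; simpl. constructor; constructor.
  inversion H1; subst. constructor.
  - apply Forall_app; split; auto. constructor; [apply H2; left; auto| constructor].
  - apply IHl; auto. intros; apply H2; right; auto. Qed.

Lemma part_sp : forall n, (1 <= n)%nat -> sp_sets (map fst (part n)).
Proof. intros n hn. rewrite <- sp_iff. unfold simple_partition. repeat split.
  - constructor. apply borel_Out. unfold pts. apply Forall_app. split.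
    + rewrite Forall_map, Forall_forall. intros k _. apply borel_and; [apply borel_ge|apply borel_lt].
    + constructor; [apply borel_eq| constructor].
  - constructor.
    + unfold pts. apply Forall_app. split.
      * rewrite Forall_map, Forall_forall. intros k hk. apply in_seq in hk. simpl. intros x hx [h1 h2].
        pose proof (tk_mono n 0 k hn ltac:(lia)). pose proof (tk_mono n (S k) n hn ltac:(lia)).
        rewrite tk_0 in H. rewrite tk_n in H0 by auto. unfold Out in hx. lra.
      * constructor; [|constructor]. simpl. intros x hx h. unfold Out in hx. lra.
    + unfold pts. apply FOP_app1.
      * apply FOP_map_seq. intros i j _ hij _. simpl. intros x [h1 h2] [h3 h4].
        pose proof (tk_mono n (S i) j hn hij). lra.
      * intros p hp. apply in_map_iff in hp. destruct hp as [k [<- hk]]. apply in_seq in hk.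
        simpl. intros x [h1 h2] h3. pose proof (tk_mono n (S k) n hn ltac:(lia)). rewrite tk_n in H by auto. lra.
  - intros x. destruct (Rlt_dec x eps) as [h|h]. exists (Out, 0). split; [left; auto| left; auto].
    destruct (Rlt_dec 1 x) as [h'|h']. exists (Out, 0). split; [left; auto| right; auto].
    destruct (Req_dec x 1) as [h1|h1].
    { exists ((fun x => x = 1), 1). split; auto. right. unfold pts. apply in_or_app. right. left; auto. }
    assert (hlt : eps < 1) by lra.
    assert (hpos : 0 < hs n). { unfold hs. apply Rdiv_lt_0_compat. lra. apply lt_0_INR; lia. }
    destruct (floor_nat ((x - eps) / hs n)) as [k [hk1 hk2]].
    { apply Rdiv_le_0_compat || (unfold Rdiv; apply Rmult_le_pos; [lra| apply Rlt_le, Rinv_0_lt_compat; lra]). }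
    assert (hkn : (k < n)%nat).
    { apply INR_lt. apply Rle_lt_trans with ((x - eps) / hs n); auto.
      unfold hs. apply Rmult_lt_reg_r with ((1 - eps) / INR n). unfold hs in hpos; auto.
      replace ((x - eps) / ((1 - eps) / INR n) * ((1 - eps) / INR n)) with (x - eps) by (field; split; [apply not_0_INR; lia| lra]).
      replace (INR n * ((1 - eps) / INR n)) with (1 - eps) by (field; apply not_0_INR; lia). lra. }
    exists (piece n k). split. right. unfold pts. apply in_or_app. left. apply in_map, in_seq. lia.
    simpl. unfold tk. rewrite S_INR. split.
    + apply Rmult_le_compat_r with (r := hs n) in hk1; [|lra].
      replace ((x - eps) / hs n * hs n) with (x - eps) in hk1 by (field; lra). lra.
    + apply Rmult_lt_compat_r with (r := hs n) in hk2; [|lra].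
      replace ((x - eps) / hs n * hs n) with (x - eps) in hk2 by (field; lra). lra.
Qed.

Lemma pts_prop : forall n p, (1 <= n)%nat -> In p (pts n) ->
  eps <= snd p <= 1 /\ forall x, fst p x -> Rabs (x - snd p) <= hs n.
Proof. intros n p hn hp. unfold pts in hp. apply in_app_or in hp. destruct hp as [hp|[hp|[]]].
  - apply in_map_iff in hp. destruct hp as [k [<- hk]]. apply in_seq in hk. simpl.
    pose proof (tk_mono n 0 k hn ltac:(lia)). pose proof (tk_mono n k n hn ltac:(lia)).
    rewrite tk_0 in H. rewrite tk_n in H0 by auto. split. lra.
    intros x [h1 h2]. unfold tk in *. rewrite S_INR in h2. apply Rabs_le. lra.
  - subst p. simpl. split. lra. intros x hx. subst. rewrite Rminus_diag, Rabs_R0. apply hs_nonneg; auto.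
Qed.

Lemma pts_mass : forall n, (1 <= n)%nat -> lsum (fun p => mu (fst p)) (pts n) = 1.
Proof. intros n hn. destruct (part_sp n hn) as [A [B C]].
  rewrite Forall_map in A. rewrite <- FOP_map_fst in B. destruct Hm as [Hf HT].
  pose proof (mu_partition mu Hf (part n) (fun _ => True) A B borel_True) as P.
  rewrite HT in P. rewrite P.
  - simpl. rewrite (mu_ext mu (fun x => True /\ Out x) Out) by tauto. rewrite mu_Out, Rplus_0_l.
    apply lsum_ext_in. intros p _. apply mu_ext. tauto.
  - intros x _. destruct (C x) as [Q [hQ hx]]. apply in_map_iff in hQ. destruct hQ as [q [<- hq]]. eauto. Qed.

Definition Rsum (n : nat) (f : R -> R) : R := lsum (fun p => f (snd p) * mu (fst p)) (pts n).

Definition lowL n f B K := (Out, -B) :: map (fun p => (fst p, f (snd p) - K * hs n)) (pts n).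
Definition upL n f B K := (Out, B) :: map (fun p => (fst p, f (snd p) + K * hs n)) (pts n).

Lemma map_fst_low : forall n f B K, map fst (lowL n f B K) = map fst (part n).
Proof. intros. simpl. f_equal. rewrite map_map. reflexivity. Qed.
Lemma map_fst_up : forall n f B K, map fst (upL n f B K) = map fst (part n).
Proof. intros. simpl. f_equal. rewrite map_map. reflexivity. Qed.

Variable f : R -> R.
Variables B K : R.
Hypothesis HK : 0 <= K.
Hypothesis Hlip : forall x y, Rabs (f x - f y) <= K * Rabs (x - y).
Hypothesis Hbd : forall x, Rabs (f x) <= B.

Lemma low_ok : forall n, (1 <= n)%nat -> simple_partition (lowL n f B K) /\ simple_below f (lowL n f B K).
Proof. intros n hn. split. apply sp_iff. rewrite map_fst_low. apply part_sp; auto.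
  unfold simple_below. constructor. simpl. intros x _. pose proof (Hbd x). apply Rabs_le_inv in H. lra.
  rewrite Forall_map, Forall_forall. intros p hp. simpl. intros x hx.
  destruct (pts_prop n p hn hp) as [_ H]. pose proof (H x hx). pose proof (Hlip x (snd p)).
  apply Rabs_le_inv in H1. assert (K * Rabs (x - snd p) <= K * hs n) by (apply Rmult_le_compat_l; auto). lra. Qed.

Lemma up_ok : forall n, (1 <= n)%nat -> simple_partition (upL n f B K) /\ simple_above f (upL n f B K).
Proof. intros n hn. split. apply sp_iff. rewrite map_fst_up. apply part_sp; auto.
  unfold simple_above. constructor. simpl. intros x _. pose proof (Hbd x). apply Rabs_le_inv in H. lra.
  rewrite Forall_map, Forall_forall. intros p hp. simpl. intros x hx.
  destruct (pts_prop n p hn hp) as [_ H]. pose proof (H x hx). pose proof (Hlip x (snd p)).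
  apply Rabs_le_inv in H1. assert (K * Rabs (x - snd p) <= K * hs n) by (apply Rmult_le_compat_l; auto). lra. Qed.

Lemma low_val : forall n, (1 <= n)%nat -> simple_integral mu (lowL n f B K) = Rsum n f - K * hs n.
Proof. intros n hn. rewrite simple_integral_lsum. unfold lowL. simpl. rewrite mu_Out, lsum_map. simpl.
  assert (lsum (fun a => (f (snd a) - K*hs n) * mu (fst a)) (pts n) = Rsum n f + (-(K*hs n)) * lsum (fun p => mu (fst p)) (pts n)).
  { unfold Rsum. rewrite <- lsum_scal, <- lsum_plus. apply lsum_ext_in; intros; ring. }
  rewrite H, pts_mass by auto. ring. Qed.

Lemma up_val : forall n, (1 <= n)%nat -> simple_integral mu (upL n f B K) = Rsum n f + K * hs n.
Proof. intros n hn. rewrite simple_integral_lsum. unfold upL. simpl. rewrite mu_Out, lsum_map. simpl.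
  assert (lsum (fun a => (f (snd a) + K*hs n) * mu (fst a)) (pts n) = Rsum n f + (K*hs n) * lsum (fun p => mu (fst p)) (pts n)).
  { unfold Rsum. rewrite <- lsum_scal, <- lsum_plus. apply lsum_ext_in; intros; ring. }
  rewrite H, pts_mass by auto. ring. Qed.

Lemma integ_approx : forall I n, is_integral mu f I -> (1 <= n)%nat -> Rabs (I - Rsum n f) <= K * hs n.
Proof. intros I n [H1 [H2 _]] hn. destruct (low_ok n hn) as [a b]. destruct (up_ok n hn) as [c d].
  pose proof (H1 _ a b). pose proof (H2 _ c d). rewrite low_val in H by auto. rewrite up_val in H0 by auto.
  apply Rabs_le. lra. Qed.

Lemma integ_exists : exists I, is_integral mu f I.
Proof. destruct Hm as [Hf HT].
  set (E := fun v => exists l, simple_partition l /\ simple_below f l /\ v = simple_integral mu l).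
  assert (top : simple_partition [((fun _ : R => True), B)] /\ simple_above f [((fun _ : R => True), B)]).
  { split. apply sp_iff. apply sp_single. constructor; [|constructor]. simpl. intros x _.
    pose proof (Hbd x). apply Rabs_le_inv in H; lra. }
  assert (bot : simple_partition [((fun _ : R => True), -B)] /\ simple_below f [((fun _ : R => True), -B)]).
  { split. apply sp_iff. apply sp_single. constructor; [|constructor]. simpl. intros x _.
    pose proof (Hbd x). apply Rabs_le_inv in H; lra. }
  assert (Hb : bound E).
  { exists (simple_integral mu [((fun _ : R => True), B)]). intros v [l [h1 [h2 ->]]].
    apply (simple_compare mu Hf f); tauto. }
  assert (Hne : exists v, E v) by (exists (simple_integral mu [((fun _ : R => True), -B)]); exists [((fun _ : R => True), -B)]; tauto).
  destruct (completeness E Hb Hne) as [I [HI1 HI2]].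
  exists I. split; [|split].
  - intros l h1 h2. apply HI1. exists l; auto.
  - intros u h1 h2. apply HI2. intros v [l [g1 [g2 ->]]]. apply (simple_compare mu Hf f); auto.
  - intros eta heta.
    destruct (floor_nat (2 * K / eta)) as [n0 [_ hn0]].
    { unfold Rdiv; apply Rmult_le_pos; [lra| apply Rlt_le, Rinv_0_lt_compat; lra]. }
    set (n := S n0). assert (hn : (1 <= n)%nat) by (unfold n; lia).
    exists (lowL n f B K), (upL n f B K).
    destruct (low_ok n hn), (up_ok n hn). split; [auto|split;[auto|split;[auto|split;[auto|]]]].
    rewrite low_val, up_val by auto.
    assert (hn' : INR n = INR n0 + 1) by (unfold n; apply S_INR).
    pose proof (pos_INR n0).
    assert (hs n <= 1 / INR n).
    { unfold hs. unfold Rdiv. apply Rmult_le_compat_r. apply Rlt_le, Rinv_0_lt_compat; lra. lra. }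
    assert (2 * K * (1 / INR n) < eta).
    { apply Rmult_lt_reg_r with (INR n / eta). apply Rdiv_lt_0_compat; lra.
      replace (2 * K * (1 / INR n) * (INR n / eta)) with (2 * K / eta) by (field; lra).
      replace (eta * (INR n / eta)) with (INR n) by (field; lra). lra. }
    assert (K * hs n <= K * (1 / INR n)) by (apply Rmult_le_compat_l; auto). lra.
Qed.

End Grid.


Lemma Rsum_lin : forall mu eps n f g a b,
  Rsum mu eps n (fun t => a * f t + b * g t) = a * Rsum mu eps n f + b * Rsum mu eps n g.
Proof. intros. unfold Rsum. rewrite <- !lsum_scal, <- lsum_plus. apply lsum_ext_in; intros; ring. Qed.

Lemma Rsum_sumR : forall mu eps n N (F : nat -> R -> R),
  Rsum mu eps n (fun t => sumR N (fun i => F i t)) = sumR N (fun i => Rsum mu eps n (F i)).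
Proof. intros. induction N.
  - unfold Rsum. simpl. induction (pts eps n); simpl; auto. rewrite IHl; ring.
  - rewrite sumR_S. rewrite <- IHN. unfold Rsum. rewrite <- lsum_plus. apply lsum_ext_in; intros.
    rewrite sumR_S. ring. Qed.

Lemma Rsum_ext : forall mu eps n f g, (forall t, f t = g t) -> Rsum mu eps n f = Rsum mu eps n g.
Proof. intros. unfold Rsum. apply lsum_ext_in. intros; rewrite H; auto. Qed.

Lemma Rsum_lb : forall mu eps n g m, borel_probability_measure mu -> 0 < eps <= 1 ->
  mu (fun x => eps <= x <= 1) = 1 -> (1 <= n)%nat ->
  (forall t, eps <= t <= 1 -> m <= g t) -> m <= Rsum mu eps n g.
Proof. intros mu eps n g m Hm He Hs hn Hg. rewrite <- (Rmult_1_r m). rewrite <- (pts_mass mu eps Hm He Hs n hn).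
  unfold Rsum. rewrite <- lsum_scal. apply lsum_le_in. intros p hp.
  destruct (pts_prop eps He n p hn hp) as [h _]. apply Rmult_le_compat_r.
  destruct Hm as [Hf _]. apply (mu_nonneg mu Hf).
  destruct (part_sp eps He n hn) as [A _]. rewrite Forall_forall in A. apply A.
  right. apply in_map; auto. auto. Qed.

Lemma lip_cos : forall j x y, Rabs (cos (2*PI*INR j*x) - cos (2*PI*INR j*y)) <= 2*PI*INR j * Rabs (x - y).
Proof. intros. eapply Rle_trans; [apply cos_lip|]. replace (2*PI*INR j*x - 2*PI*INR j*y) with ((2*PI*INR j) * (x - y)) by ring.
  rewrite Rabs_mult, Rabs_pos_eq. lra. pose proof PI_RGT_0; pose proof (pos_INR j); nra. Qed.

Lemma lip_sin : forall j x y, Rabs (sin (2*PI*INR j*x) - sin (2*PI*INR j*y)) <= 2*PI*INR j * Rabs (x - y).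
Proof. intros. rewrite form4. rewrite !Rabs_mult.
  pose proof (sin_abs_le ((2*PI*INR j*x - 2*PI*INR j*y)/2)). pose proof (COS_bound ((2*PI*INR j*x + 2*PI*INR j*y)/2)).
  assert (Rabs (cos ((2*PI*INR j*x + 2*PI*INR j*y)/2)) <= 1) by (apply Rabs_le; lra).
  replace ((2*PI*INR j*x - 2*PI*INR j*y)/2) with ((PI*INR j) * (x - y)) in * by field.
  rewrite Rabs_mult, (Rabs_pos_eq (PI * INR j)) in H by (pose proof PI_RGT_0; pose proof (pos_INR j); nra).
  rewrite (Rabs_pos_eq 2) by lra. pose proof (Rabs_pos (cos ((2 * PI * INR j * x + 2 * PI * INR j * y) / 2))).
  pose proof (Rabs_pos (sin (PI * INR j * (x - y)))). nra. Qed.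

Lemma bnd_cos : forall j x, Rabs (cos (2*PI*INR j*x)) <= 1.
Proof. intros. apply Rabs_le, COS_bound. Qed.
Lemma bnd_sin : forall j x, Rabs (sin (2*PI*INR j*x)) <= 1.
Proof. intros. apply Rabs_le, SIN_bound. Qed.

Lemma K_nonneg : forall j, 0 <= 2*PI*INR j.
Proof. intros. pose proof PI_RGT_0; pose proof (pos_INR j); nra. Qed.

Lemma key_ineq : forall mu eps N (Cf Sf : nat -> R), borel_probability_measure mu -> 0 < eps <= 1 ->
  mu (fun x => eps <= x <= 1) = 1 -> (1 <= N)%nat ->
  (forall j, (1 <= j)%nat -> is_integral mu (fun x => cos (2*PI*INR j*x)) (Cf j)) ->
  (forall j, (1 <= j)%nat -> is_integral mu (fun x => sin (2*PI*INR j*x)) (Sf j)) ->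
  PI^2 * eps^2 / 2 - 4 / INR N <= sumR N (fun i => alpha eps (S i) * Cf (S i) + beta eps (S i) * Sf (S i)).
Proof. intros mu eps N Cf Sf Hm He Hs hN1 HC HS.
  set (target := PI^2 * eps^2 / 2 - 4 / INR N).
  set (A := sumR N (fun i => (Rabs (alpha eps (S i)) + Rabs (beta eps (S i))) * (2*PI*INR (S i)))).
  assert (HA : 0 <= A). { unfold A. replace 0 with (sumR N (fun _ => 0)) by (rewrite sumR_const; ring). apply sumR_le. intros.
    pose proof (Rabs_pos (alpha eps (S i))). pose proof (Rabs_pos (beta eps (S i))). pose proof (K_nonneg (S i)). nra. }
  assert (Hn : forall n, (1 <= n)%nat -> target - A * hs eps n <= sumR N (fun i => alpha eps (S i) * Cf (S i) + beta eps (S i) * Sf (S i))).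
  { intros n hn.
    assert (R1 : target <= Rsum mu eps n (fun t => hN N eps t)).
    { apply Rsum_lb; auto. intros t ht. apply main_H; auto. }
    unfold hN in R1. rewrite Rsum_sumR in R1.
    rewrite (sumR_ext N (fun i => Rsum mu eps n (fun t => hT eps t (S i)))
      (fun i => alpha eps (S i) * Rsum mu eps n (fun t => cos (2*PI*INR (S i)*t)) + beta eps (S i) * Rsum mu eps n (fun t => sin (2*PI*INR (S i)*t)))) in R1.
    2:{ intros i hi. rewrite <- Rsum_lin. apply Rsum_ext. intros t. apply hT_ab. lia. }
    assert (D : sumR N (fun i => alpha eps (S i) * Rsum mu eps n (fun t => cos (2*PI*INR (S i)*t)) + beta eps (S i) * Rsum mu eps n (fun t => sin (2*PI*INR (S i)*t)))
      - sumR N (fun i => alpha eps (S i) * Cf (S i) + beta eps (S i) * Sf (S i)) <= A * hs eps n).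
    { rewrite <- sumR_minus. unfold A. rewrite (Rmult_comm (sumR _ _) (hs eps n)), <- sumR_scal. apply sumR_le. intros i hi.
      pose proof (integ_approx mu eps Hm He Hs _ 1 _ (K_nonneg (S i)) (lip_cos (S i)) (bnd_cos (S i)) (Cf (S i)) n (HC (S i) ltac:(lia)) hn) as E1.
      pose proof (integ_approx mu eps Hm He Hs _ 1 _ (K_nonneg (S i)) (lip_sin (S i)) (bnd_sin (S i)) (Sf (S i)) n (HS (S i) ltac:(lia)) hn) as E2.
      set (a := alpha eps (S i)) in *. set (b := beta eps (S i)) in *.
      set (r1 := Rsum mu eps n (fun t => cos (2 * PI * INR (S i) * t))) in *.
      set (r2 := Rsum mu eps n (fun t => sin (2 * PI * INR (S i) * t))) in *.
      set (K := 2 * PI * INR (S i)) in *. set (h := hs eps n) in *.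
      replace (a * r1 + b * r2 - (a * Cf (S i) + b * Sf (S i))) with (a * (r1 - Cf (S i)) + b * (r2 - Sf (S i))) by ring.
      eapply Rle_trans; [apply Rabs_le_inv; apply Rle_refl|].
      rewrite <- Rabs_Ropp in E1, E2. replace (- (Cf (S i) - r1)) with (r1 - Cf (S i)) in E1 by ring.
      replace (- (Sf (S i) - r2)) with (r2 - Sf (S i)) in E2 by ring.
      assert (Rabs (a * (r1 - Cf (S i)) + b * (r2 - Sf (S i))) <= Rabs a * (K*h) + Rabs b * (K*h)).
      { eapply Rle_trans; [apply Rabs_triang|]. rewrite !Rabs_mult.
        pose proof (Rabs_pos a). pose proof (Rabs_pos b).
        apply Rplus_le_compat; apply Rmult_le_compat_l; auto. }
      assert (E: h * ((Rabs a + Rabs b) * K) = Rabs a * (K*h) + Rabs b * (K*h)) by ring. lra. }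
    lra. }
  apply Rnot_lt_le. intro Hc.
  set (gap := target - sumR N (fun i => alpha eps (S i) * Cf (S i) + beta eps (S i) * Sf (S i))).
  assert (Hg : 0 < gap) by (unfold gap; lra).
  destruct (floor_nat (A / gap)) as [n0 [_ hn0]].
  { unfold Rdiv. apply Rmult_le_pos; auto. apply Rlt_le, Rinv_0_lt_compat; auto. }
  set (n := S n0). assert (hn : (1 <= n)%nat) by (unfold n; lia).
  specialize (Hn n hn).
  assert (hn' : INR n = INR n0 + 1) by (unfold n; apply S_INR). pose proof (pos_INR n0).
  assert (hs eps n <= 1 / INR n).
  { unfold hs. unfold Rdiv. apply Rmult_le_compat_r. apply Rlt_le, Rinv_0_lt_compat; lra. lra. }
  assert (A * (1 / INR n) < gap).
  { apply Rmult_lt_reg_r with (INR n / gap). apply Rdiv_lt_0_compat; lra.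
    replace (A * (1 / INR n) * (INR n / gap)) with (A / gap) by (field; lra).
    replace (gap * (INR n / gap)) with (INR n) by (field; lra). lra. }
  assert (A * hs eps n <= A * (1 / INR n)) by (apply Rmult_le_compat_l; auto).
  unfold gap in *. lra.
Qed.


Lemma integ_bound : forall mu f I, borel_probability_measure mu -> (forall x, Rabs (f x) <= 1) ->
  is_integral mu f I -> Rabs I <= 1.
Proof. intros mu f I [Hf HT] Hb [H1 [H2 _]].
  assert (sp : simple_partition [((fun _ : R => True), 1)]) by (apply sp_iff, sp_single).
  assert (sp' : simple_partition [((fun _ : R => True), -1)]) by (apply sp_iff, sp_single).
  assert (a : simple_above f [((fun _ : R => True), 1)]).
  { constructor; [|constructor]. simpl. intros x _. pose proof (Hb x). apply Rabs_le_inv in H. lra. }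
  assert (b : simple_below f [((fun _ : R => True), -1)]).
  { constructor; [|constructor]. simpl. intros x _. pose proof (Hb x). apply Rabs_le_inv in H. lra. }
  pose proof (H2 _ sp a). pose proof (H1 _ sp' b). simpl in H, H0. rewrite HT in H, H0.
  apply Rabs_le. lra. Qed.

Theorem lemma1 : forall eps : R, 0 < eps <= 1 ->
  (forall mu : (R -> Prop) -> R,
     borel_probability_measure mu ->
     mu (fun x => eps <= x <= 1) = 1 ->
     exists s : R,
       is_lub (fun a => exists j : nat, (1 <= j)%nat /\ fourier_abs mu (INR j) a) s /\
       PI * eps / (8 + 2 * PI * eps) <= s) /\
  eps / 5 <= PI * eps / (8 + 2 * PI * eps).
Proof. intros eps He. pose proof PI_RGT_0 as HP.
  assert (HP3 : 3 < PI) by (pose proof PI2_3_2; lra).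
  split.
  - intros mu Hm Hs.
    set (Cf := fun j : nat => epsilon (inhabits 0) (fun I => is_integral mu (fun x => cos (2*PI*INR j*x)) I)).
    set (Sf := fun j : nat => epsilon (inhabits 0) (fun I => is_integral mu (fun x => sin (2*PI*INR j*x)) I)).
    assert (HC : forall j, is_integral mu (fun x => cos (2*PI*INR j*x)) (Cf j)).
    { intros j. unfold Cf. apply epsilon_spec.
      apply (integ_exists mu eps Hm He Hs _ 1 _ (K_nonneg j) (lip_cos j) (bnd_cos j)). }
    assert (HS : forall j, is_integral mu (fun x => sin (2*PI*INR j*x)) (Sf j)).
    { intros j. unfold Sf. apply epsilon_spec.
      apply (integ_exists mu eps Hm He Hs _ 1 _ (K_nonneg j) (lip_sin j) (bnd_sin j)). }
    set (E := fun a => exists j : nat, (1 <= j)%nat /\ fourier_abs mu (INR j) a).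
    assert (Hmem : forall j, (1 <= j)%nat -> E (sqrt (Cf j ^ 2 + Sf j ^ 2))).
    { intros j hj. exists j. split; auto. exists (Cf j), (Sf j). auto. }
    assert (Hb : bound E).
    { exists 2. intros a [j [hj [C [S [h1 [h2 ->]]]]]].
      pose proof (integ_bound mu _ C Hm (bnd_cos j) h1). pose proof (integ_bound mu _ S Hm (bnd_sin j) h2).
      apply Rabs_le_inv in H. apply Rabs_le_inv in H0.
      assert (C^2 + S^2 <= 4) by nra.
      rewrite <- sqrt_Rsqr with (x := 2) by lra. apply sqrt_le_1_alt. unfold Rsqr. lra. }
    destruct (completeness E Hb (ex_intro _ _ (Hmem 1%nat (le_n 1)))) as [s [Hs1 Hs2]].
    exists s. split. split; auto.
    assert (Hup : forall j, (1 <= j)%nat -> sqrt (Cf j ^ 2 + Sf j ^ 2) <= s) by (intros; apply Hs1; auto).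
    assert (s0 : 0 <= s) by (eapply Rle_trans; [apply sqrt_pos| apply (Hup 1%nat (le_n 1))]).
    set (W := 4 * PI * eps + PI^2 * eps^2).
    assert (Hall : forall N, (1 <= N)%nat -> PI^2 * eps^2 / 2 - 4 / INR N <= s * W).
    { intros N hN. eapply Rle_trans. apply (key_ineq mu eps N Cf Sf Hm He Hs hN); auto.
      apply Rle_trans with (sumR N (fun i => wt eps (S i) * s)).
      - apply sumR_le. intros i hi. eapply Rle_trans. apply cs_bound. lia.
        apply Rmult_le_compat_l. apply wt_nonneg. apply Hup. lia.
      - rewrite (sumR_ext N _ (fun i => s * wt eps (S i))) by (intros; ring).
        rewrite sumR_scal. apply Rmult_le_compat_l; auto. apply wt_sum; auto. }
    assert (Hlim : PI^2 * eps^2 / 2 <= s * W).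
    { apply Rnot_lt_le. intro Hc. set (gap := PI^2 * eps^2 / 2 - s * W).
      assert (0 < gap) by (unfold gap; lra).
      destruct (floor_nat (4 / gap)) as [n0 [_ hn0]].
      { unfold Rdiv. apply Rmult_le_pos. lra. apply Rlt_le, Rinv_0_lt_compat; auto. }
      pose proof (Hall (S n0) ltac:(lia)). rewrite S_INR in H0. pose proof (pos_INR n0).
      assert (4 / (INR n0 + 1) < gap).
      { apply Rmult_lt_reg_r with ((INR n0 + 1) / gap). apply Rdiv_lt_0_compat; lra.
        replace (4 / (INR n0 + 1) * ((INR n0 + 1) / gap)) with (4 / gap) by (field; lra).
        replace (gap * ((INR n0 + 1) / gap)) with (INR n0 + 1) by (field; lra). lra. }
      unfold gap in *. lra. }
    assert (Hpe : 0 < PI * eps) by nra.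
    unfold W in Hlim.
    apply Rmult_le_reg_r with (8 + 2 * PI * eps). nra.
    replace (PI * eps / (8 + 2 * PI * eps) * (8 + 2 * PI * eps)) with (PI * eps) by (field; nra).
    apply Rmult_le_reg_r with (PI * eps / 2). lra.
    replace (PI * eps * (PI * eps / 2)) with (PI ^ 2 * eps ^ 2 / 2) by field.
    replace (s * (8 + 2 * PI * eps) * (PI * eps / 2)) with (s * (4 * PI * eps + PI ^ 2 * eps ^ 2)) by field.
    exact Hlim.
  - apply Rmult_le_reg_r with (5 * (8 + 2 * PI * eps)). nra.
    replace (eps / 5 * (5 * (8 + 2 * PI * eps))) with (eps * (8 + 2 * PI * eps)) by field.
    replace (PI * eps / (8 + 2 * PI * eps) * (5 * (8 + 2 * PI * eps))) with (5 * PI * eps) by (field; nra).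
    assert (8 + 2 * PI * eps <= 5 * PI) by nra.
    replace (5 * PI * eps) with (eps * (5 * PI)) by ring.
    apply Rmult_le_compat_l; lra.
Qed.
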